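(* On the free algebra $\mathbb{C}\langle x,y\rangle$ each of the following pairs consists of two compatible Poisson brackets (each is a Poisson structure and their Schouten bracket vanishes): (1) $[xx^*,x^*]+[yy^*,x^*]$ and $[yy^*,xy^*]-[y^*,x^2x^*+xyy^*]$; (2) $[xx^*,x^*]+[yx^*,y^*]$ and $[yy^*,yxx^*+y^2y^*]$; (3) $[xy^*,xx^*]$ and $[x^2x^*+xyy^*,yx^*]+[yxx^*+y^2y^*,xx^*+yy^*]$.
   Context: $\mathbb{C}\langle x,y\rangle$ is the path algebra of the quiver $Q$ with one vertex and two loops $x,y$; the double quiver $\bar Q$ has loops $x,y,x^*,y^*$, and $\mathbb{C}\bar Q=\mathbb{C}\langle x,y,x^*,y^*\rangle$, graded by the number $r$ of starred letters in a monomial. $\mathcal{V}Q$ is the quotient of $\mathbb{C}\bar Q$ by the span of $PR-(-1)^{pr}RP$ for $P,R$ homogeneous of degrees $p,r$. For $w\in\{x,y,x^*,y^*\}$, $D_w(x_1\cdots x_n)=\sum_{i:x_i=w}(-1)^{\lambda_i\mu_i}x_{i+1}\cdots x_nx_1\cdots x_{i-1}$, $\lambda_i$ (resp. $\mu_i$) the number of starred letters among $x_{i+1},\dots,x_n$ (resp. $x_1,\dots,x_i$). For $\gamma\in\mathcal{V}^rQ,\delta\in\mathcal{V}^sQ$: $[\gamma,\delta]_{\mathcal V}=\sum_{a\in\{x,y\}}\big(D_{a^*}(\gamma)D_a(\delta)-(-1)^{(r-1)(s-1)}D_{a^*}(\delta)D_a(\gamma)\big)$ modulo the relations. A Poisson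 bracket (structure) is $\Pi\in\mathcal{V}^2Q$ with $[\Pi,\Pi]_{\mathcal V}=0$; $\Pi_1,\Pi_2$ are compatible if $[\Pi_i,\Pi_j]_{\mathcal V}=0$ for $i,j=1,2$. Here $[u,v]=uv-vu$ in $\mathcal{V}Q$. *)

(* Defs.v *)
From HB Require Import structures.
From mathcomp Require Import all_boot all_algebra.
From mathcomp Require Import complex Rstruct.
Set Implicit Arguments. Unset Strict Implicit. Unset Printing Implicit Defensive.
Import GRing.Theory.
Local Open Scope ring_scope.

Definition CC : Type := complex Rdefinitions.R.

(** Letters of the double quiver: the four loops x, y, x^*, y^*. *)
Inductive letter := Lx | Ly | Lxs | Lys.

Definition letter_eqb (a b : letter) : bool :=
  match a, b with
  | Lx, Lx | Ly, Ly | Lxs, Lxs | Lys, Lys => true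
  | _, _ => false
  end.

Lemma letter_eqP : Equality.axiom letter_eqb.
Proof. by case; case; constructor. Qed.

HB.instance Definition _ := hasDecEq.Build letter letter_eqP.

Definition starred (a : letter) : bool :=
  match a with Lxs | Lys => true | _ => false end.

Definition star (a : letter) : letter :=
  match a with Lx => Lxs | Ly => Lys | b => b end.

Definition nstar (w : seq letter) : nat := count starred w.

(** Elements of C\bar Q = C<x,y,x^*,y^*> are represented by formal finite
    linear combinations of words; two representations denote the same element
    of C\bar Q iff they have the same coefficient function [coef]. *)
Definition fa := seq (CC * seq letter).

Definition coef (f : fa) (w : seq letter) : CC :=
  \sum_(t <- f | t.2 == w) t.1.

Definition fa_add (f g : fa) : fa := f ++ g.
Definition fa_scale (c : CC) (f : fa) : fa := [seq (c * t.1, t.2) | t <- f].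
Definition fa_sub (f g : fa) : fa := fa_add f (fa_scale (-1) g).
Definition fa_mul (f g : fa) : fa :=
  [seq (t.1 * u.1, t.2 ++ u.2) | t <- f, u <- g].
Definition fa_sum (l : seq fa) : fa := flatten l.
Definition mono (w : seq letter) : fa := [:: (1, w)].

Definition homog (p : nat) (f : fa) : Prop :=
  forall w, coef f w != 0 -> nstar w = p.

Definition rel_gen (P R : fa) (p r : nat) : fa :=
  fa_sub (fa_mul P R) (fa_scale ((-1) ^+ (p * r)) (fa_mul R P)).

(** [vzero f]: f lies in the (linear) span of the elements PR - (-1)^{pr} RP
    with P, R homogeneous of degrees p, r; i.e. f = 0 in VQ. *)
Definition vzero (f : fa) : Prop :=
  exists L : seq (CC * fa * fa * nat * nat),
    (forall t, t \in L -> homog t.2 t.1.1.2 /\ homog t.1.2 t.1.1.1.2) /\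
    forall w, coef f w =
      coef (fa_sum [seq fa_scale t.1.1.1.1 (rel_gen t.1.1.1.2 t.1.1.2 t.1.2 t.2)
                   | t <- L]) w.

(** Double derivation D_w on a monomial x_1 ... x_n (0-indexed position i here
    corresponds to position i+1 in the paper):
    sum over i with x_i = w of (-1)^{lambda_i mu_i} x_{i+1} ... x_n x_1 ... x_{i-1},
    lambda_i = #starred among x_{i+1..n}, mu_i = #starred among x_{1..i}. *)
Definition Dmono (a : letter) (s : seq letter) : fa :=
  [seq ((-1) ^+ (nstar (drop i.+1 s) * nstar (take i.+1 s)),
        drop i.+1 s ++ take i s)
  | i <- iota 0 (size s) & nth Lx s i == a].

Definition D (a : letter) (f : fa) : fa :=
  fa_sum [seq fa_scale t.1 (Dmono a t.2) | t <- f].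

(** [gamma, delta]_V for gamma of degree r and delta of degree s
    (computed on representatives in C\bar Q). *)
Definition vbracket (r s : nat) (g d : fa) : fa :=
  fa_sum [seq fa_sub (fa_mul (D (star a) g) (D a d))
                     (fa_scale ((-1) ^ ((r%:Z - 1) * (s%:Z - 1)))
                               (fa_mul (D (star a) d) (D a g)))
         | a <- [:: Lx; Ly]].

Definition comm (u v : fa) : fa := fa_sub (fa_mul u v) (fa_mul v u).

Definition poisson (Pi : fa) : Prop :=
  homog 2 Pi /\ vzero (vbracket 2 2 Pi Pi).

Definition compatible (P1 P2 : fa) : Prop :=
  poisson P1 /\ poisson P2 /\
  vzero (vbracket 2 2 P1 P1) /\ vzero (vbracket 2 2 P1 P2) /\
  vzero (vbracket 2 2 P2 P1) /\ vzero (vbracket 2 2 P2 P2).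

Definition x2xs_xyys : fa := fa_add (mono [:: Lx; Lx; Lxs]) (mono [:: Lx; Ly; Lys]).
Definition yxxs_y2ys : fa := fa_add (mono [:: Ly; Lx; Lxs]) (mono [:: Ly; Ly; Lys]).

Definition Pi1a : fa :=
  fa_add (comm (mono [:: Lx; Lxs]) (mono [:: Lxs]))
         (comm (mono [:: Ly; Lys]) (mono [:: Lxs])).
Definition Pi1b : fa :=
  fa_sub (comm (mono [:: Ly; Lys]) (mono [:: Lx; Lys]))
         (comm (mono [:: Lys]) x2xs_xyys).

Definition Pi2a : fa :=
  fa_add (comm (mono [:: Lx; Lxs]) (mono [:: Lxs]))
         (comm (mono [:: Ly; Lxs]) (mono [:: Lys])).
Definition Pi2b : fa := comm (mono [:: Ly; Lys]) yxxs_y2ys.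

Definition Pi3a : fa := comm (mono [:: Lx; Lys]) (mono [:: Lx; Lxs]).
Definition Pi3b : fa :=
  fa_add (comm x2xs_xyys (mono [:: Ly; Lxs]))
         (comm yxxs_y2ys (fa_add (mono [:: Lx; Lxs]) (mono [:: Ly; Lys]))).

(* Main.v *)
Require Import Defs.
From mathcomp Require Import all_boot all_algebra complex Rstruct.
Set Implicit Arguments. Unset Strict Implicit. Unset Printing Implicit Defensive.
Import GRing.Theory.
Local Open Scope ring_scope.
Notation C := (complex Rdefinitions.R).

Definition faZ := seq (int * seq letter).
Definition mZ (f : faZ) : fa := [seq (((t.1)%:~R : C), t.2) | t <- f].
Definition sgn (n : nat) : int := if odd n then -1 else 1.
Lemma sgnE n : ((sgn n)%:~R : C) = (-1) ^+ n.
Proof. by rewrite /sgn -signr_odd; case: (odd n); rewrite ?expr1 ?expr0 ?rmorphN1 ?rmorph1. Qed.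

Definition scaleZ (c : int) (f : faZ) : faZ := [seq (c * t.1, t.2) | t <- f].
Definition subZ (f g : faZ) : faZ := f ++ scaleZ (-1) g.
Definition mulZ (f g : faZ) : faZ := [seq (t.1 * u.1, t.2 ++ u.2) | t <- f, u <- g].
Definition monoZ (w : seq letter) : faZ := [:: (1, w)].
Definition relZ (P R : faZ) (p r : nat) : faZ :=
  subZ (mulZ P R) (scaleZ (sgn (p * r)) (mulZ R P)).
Definition DmonoZ (a : letter) (s : seq letter) : faZ :=
  [seq (sgn (nstar (drop i.+1 s) * nstar (take i.+1 s)), drop i.+1 s ++ take i s)
  | i <- iota 0 (size s) & nth Lx s i == a].
Definition DZ (a : letter) (f : faZ) : faZ :=
  flatten [seq scaleZ t.1 (DmonoZ a t.2) | t <- f].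
Definition vbZ (g d : faZ) : faZ :=
  flatten [seq subZ (mulZ (DZ (star a) g) (DZ a d))
                     (scaleZ (-1) (mulZ (DZ (star a) d) (DZ a g)))
         | a <- [:: Lx; Ly]].
Definition commZ (u v : faZ) : faZ := subZ (mulZ u v) (mulZ v u).

Lemma mZ_cat f g : mZ (f ++ g) = fa_add (mZ f) (mZ g).
Proof. by rewrite /mZ map_cat. Qed.
Lemma mZ_scale c f : mZ (scaleZ c f) = fa_scale c%:~R (mZ f).
Proof. by rewrite /mZ /scaleZ /fa_scale -!map_comp; apply: eq_map => t /=; rewrite intrM. Qed.
Lemma mZ_sub f g : mZ (subZ f g) = fa_sub (mZ f) (mZ g).
Proof. by rewrite /subZ mZ_cat mZ_scale rmorphN1. Qed.
Lemma mZ_mul f g : mZ (mulZ f g) = fa_mul (mZ f) (mZ g).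
Proof.
elim: f => //= t f IH.
rewrite /mZ /mulZ /fa_mul /= map_cat; congr (_ ++ _); last exact: IH.
by rewrite -!map_comp; apply: eq_map => u /=; rewrite intrM.
Qed.
Lemma mZ_mono w : mZ (monoZ w) = mono w.
Proof. by rewrite /mZ /= rmorph1. Qed.
Lemma mZ_comm f g : mZ (commZ f g) = comm (mZ f) (mZ g).
Proof. by rewrite /commZ mZ_sub !mZ_mul. Qed.
Lemma mZ_rel P R p r : mZ (relZ P R p r) = rel_gen (mZ P) (mZ R) p r.
Proof. by rewrite /relZ mZ_sub mZ_scale !mZ_mul sgnE. Qed.
Lemma mZ_flatten l : mZ (flatten l) = fa_sum (map mZ l).
Proof. by elim: l => //= f l IH; rewrite mZ_cat IH. Qed.
Lemma mZ_Dmono a s : mZ (DmonoZ a s) = Dmono a s.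
Proof. by rewrite /mZ /DmonoZ /Dmono -!map_comp; apply: eq_map => i /=; rewrite sgnE. Qed.
Lemma mZ_D a f : mZ (DZ a f) = D a (mZ f).
Proof.
rewrite /DZ /D mZ_flatten -!map_comp; congr fa_sum; apply: eq_map => t /=.
by rewrite mZ_scale mZ_Dmono.
Qed.
Lemma mZ_vb g d : mZ (vbZ g d) = vbracket 2 2 (mZ g) (mZ d).
Proof.
rewrite /vbZ /vbracket mZ_flatten /=.
by rewrite !mZ_sub !mZ_scale !mZ_mul !mZ_D rmorphN1.
Qed.

Definition coefZc (f : faZ) (w : seq letter) : int :=
  foldr (fun t acc => if t.2 == w then t.1 + acc else acc) 0 f.
Lemma coef_mZ f w : coef (mZ f) w = (coefZc f w)%:~R.
Proof.
rewrite /coef; elim: f => [|t f IH] /=; first by rewrite big_nil.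
rewrite big_cons /= IH; case: (t.2 == w) => //; by rewrite rmorphD.
Qed.
Lemma coefZc_out f w : w \notin map snd f -> coefZc f w = 0.
Proof.
elim: f => //= t f IH; rewrite in_cons negb_or => /andP [ne /IH ->].
by rewrite eq_sym (negbTE ne).
Qed.
Definition eqcoef (f g : faZ) : bool :=
  all (fun w => coefZc f w == coefZc g w) (map snd (f ++ g)).
Lemma eqcoefP f g : eqcoef f g -> forall w, coefZc f w = coefZc g w.
Proof.
move=> /allP H w; case: (boolP (w \in map snd (f ++ g))) => [/H /eqP //|].
rewrite map_cat mem_cat negb_or => /andP [a b].
by rewrite !coefZc_out.
Qed.
Definition homogb (p : nat) (f : faZ) : bool := all (fun t => nstar t.2 == p) f.
Lemma homogbP p f : homogb p f -> homog p (mZ f).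
Proof.
move=> H w; rewrite coef_mZ => nz.
case: (boolP (w \in map snd f)) => [/mapP [t tf ->]|/coefZc_out e].
  by move/allP: H => /(_ t tf) /eqP.
by move: nz; rewrite e eqxx.
Qed.

Definition LZt := (int * faZ * faZ * nat * nat)%type.
Definition mLt (t : LZt) := ((t.1.1.1.1)%:~R : C, mZ t.1.1.1.2, mZ t.1.1.2, t.1.2, t.2).
Definition sumL (L : seq LZt) : faZ :=
  flatten [seq scaleZ t.1.1.1.1 (relZ t.1.1.1.2 t.1.1.2 t.1.2 t.2) | t <- L].
Definition checkL (F : faZ) (L : seq LZt) : bool :=
  all (fun t => homogb t.2 t.1.1.2 && homogb t.1.2 t.1.1.1.2) L && eqcoef F (sumL L).
Lemma vzeroP F L : checkL F L -> vzero (mZ F).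
Proof.
move=> /andP [/allP H E]; exists (map mLt L); split.
  move=> t /mapP [u uL ->] /=; have /andP [h1 h2] := H u uL.
  by split; apply: homogbP.
move=> w; rewrite coef_mZ (eqcoefP E) -coef_mZ; congr coef.
rewrite /sumL mZ_flatten -!map_comp; congr fa_sum; apply: eq_map => t /=.
by rewrite mZ_scale mZ_rel.
Qed.
Definition rotZ (c : int) (u v : seq letter) : LZt := (c, monoZ u, monoZ v, nstar u, nstar v).

Lemma compatP A B L1 L2 L3 L4 :
  homogb 2 A -> homogb 2 B -> checkL (vbZ A A) L1 -> checkL (vbZ A B) L2 ->
  checkL (vbZ B A) L3 -> checkL (vbZ B B) L4 -> compatible (mZ A) (mZ B).
Proof.
move=> hA hB c1 c2 c3 c4.
have v1 := vzeroP c1; have v2 := vzeroP c2; have v3 := vzeroP c3; have v4 := vzeroP c4.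
rewrite !mZ_vb in v1 v2 v3 v4.
by do !split => //; apply: homogbP.
Qed.

Definition x2Z : faZ := monoZ [:: Lx; Lx; Lxs] ++ monoZ [:: Lx; Ly; Lys].
Definition yxZ : faZ := monoZ [:: Ly; Lx; Lxs] ++ monoZ [:: Ly; Ly; Lys].
Definition P1aZ : faZ := commZ (monoZ [:: Lx; Lxs]) (monoZ [:: Lxs]) ++ commZ (monoZ [:: Ly; Lys]) (monoZ [:: Lxs]).
Definition P1bZ : faZ := subZ (commZ (monoZ [:: Ly; Lys]) (monoZ [:: Lx; Lys])) (commZ (monoZ [:: Lys]) x2Z).
Definition P2aZ : faZ := commZ (monoZ [:: Lx; Lxs]) (monoZ [:: Lxs]) ++ commZ (monoZ [:: Ly; Lxs]) (monoZ [:: Lys]).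
Definition P2bZ : faZ := commZ (monoZ [:: Ly; Lys]) yxZ.
Definition P3aZ : faZ := commZ (monoZ [:: Lx; Lys]) (monoZ [:: Lx; Lxs]).
Definition P3bZ : faZ := commZ x2Z (monoZ [:: Ly; Lxs]) ++ commZ yxZ (monoZ [:: Lx; Lxs] ++ monoZ [:: Ly; Lys]).
Lemma E1a : Pi1a = mZ P1aZ. Proof. by rewrite /P1aZ mZ_cat !mZ_comm !mZ_mono. Qed.
Lemma E1b : Pi1b = mZ P1bZ. Proof. by rewrite /P1bZ /x2Z mZ_sub !mZ_comm mZ_cat !mZ_mono. Qed.
Lemma E2a : Pi2a = mZ P2aZ. Proof. by rewrite /P2aZ mZ_cat !mZ_comm !mZ_mono. Qed.
Lemma E2b : Pi2b = mZ P2bZ. Proof. by rewrite /P2bZ /yxZ !mZ_comm mZ_cat !mZ_mono. Qed.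
Lemma E3a : Pi3a = mZ P3aZ. Proof. by rewrite /P3aZ !mZ_comm !mZ_mono. Qed.
Lemma E3b : Pi3b = mZ P3bZ. Proof. by rewrite /P3bZ /x2Z /yxZ mZ_cat !mZ_comm !mZ_cat !mZ_mono. Qed.
Definition W1_0 : seq LZt := [:: rotZ (-8)%R [:: Lxs; Lx] [:: Lxs; Lxs];
  rotZ (8)%R [:: Lx] [:: Lxs; Lxs; Lxs];
  rotZ (8)%R [:: Ly; Lys] [:: Lxs; Lxs];
  rotZ (-8)%R [:: Lxs; Ly; Lys] [:: Lxs]].
Definition W1_1 : seq LZt := [:: rotZ (-4)%R [:: Lxs; Lx; Lx] [:: Lxs; Lys];
  rotZ (-4)%R [:: Lxs; Lx] [:: Lxs; Lys; Lx];
  rotZ (-4)%R [:: Lx] [:: Lxs; Lys; Ly; Lys];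
  rotZ (4)%R [:: Lx; Lxs; Lx] [:: Lxs; Lys];
  rotZ (4)%R [:: Lx] [:: Lxs; Lxs; Lys; Lx];
  rotZ (4)%R [:: Lx] [:: Lxs; Ly; Lys; Lys];
  rotZ (-4)%R [:: Ly] [:: Lys; Lys; Ly; Lys];
  rotZ (4)%R [:: Ly; Lys; Lx] [:: Lxs; Lys];
  rotZ (4)%R [:: Ly; Lys] [:: Lxs; Lys; Lx];
  rotZ (4)%R [:: Ly; Lys; Ly] [:: Lys; Lys];
  rotZ (-4)%R [:: Lys; Lx; Lx] [:: Lxs; Lxs];
  rotZ (-4)%R [:: Lx; Lys; Ly; Lys] [:: Lxs];
  rotZ (4)%R [:: Ly; Lys; Lx; Lys] [:: Lxs];
  rotZ (4)%R [:: Lx; Lx] [:: Lxs; Lys; Lxs];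
  rotZ (4)%R [:: Lx; Ly; Lys; Lys] [:: Lxs];
  rotZ (-4)%R [:: Lys; Lx; Ly; Lys] [:: Lxs]].
Definition W1_2 : seq LZt := [:: rotZ (-4)%R [:: Lys; Lx; Lx] [:: Lxs; Lxs];
  rotZ (-4)%R [:: Lxs; Lx; Lx] [:: Lxs; Lys];
  rotZ (-4)%R [:: Lxs; Lx] [:: Lxs; Lys; Lx];
  rotZ (-4)%R [:: Lx] [:: Lxs; Lys; Ly; Lys];
  rotZ (4)%R [:: Lx; Lxs; Lx] [:: Lxs; Lys];
  rotZ (4)%R [:: Lx] [:: Lxs; Lxs; Lys; Lx];
  rotZ (4)%R [:: Lx] [:: Lxs; Ly; Lys; Lys];
  rotZ (-4)%R [:: Ly] [:: Lys; Lys; Ly; Lys];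
  rotZ (4)%R [:: Ly; Lys; Lx] [:: Lxs; Lys];
  rotZ (4)%R [:: Ly; Lys] [:: Lxs; Lys; Lx];
  rotZ (4)%R [:: Ly; Lys; Ly] [:: Lys; Lys];
  rotZ (-4)%R [:: Lx; Lys; Ly; Lys] [:: Lxs];
  rotZ (4)%R [:: Ly; Lys; Lx; Lys] [:: Lxs];
  rotZ (4)%R [:: Lx; Lx] [:: Lxs; Lys; Lxs];
  rotZ (4)%R [:: Lx; Ly; Lys; Lys] [:: Lxs];
  rotZ (-4)%R [:: Lys; Lx; Ly; Lys] [:: Lxs]].
Definition W1_3 : seq LZt := [:: rotZ (8)%R [:: Lys; Lx; Lx; Lys; Ly] [:: Lys];
  rotZ (-8)%R [:: Lys; Lx; Lx; Lx] [:: Lxs; Lys];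
  rotZ (-8)%R [:: Lys; Lx; Lx] [:: Lxs; Lys; Lx];
  rotZ (-8)%R [:: Lys; Lx; Lx; Ly] [:: Lys; Lys];
  rotZ (-8)%R [:: Lx; Lys; Ly] [:: Lys; Lx; Lys];
  rotZ (-8)%R [:: Lx; Lys; Ly] [:: Lys; Lys; Lx];
  rotZ (8)%R [:: Ly] [:: Lys; Lx; Lys; Lx; Lys];
  rotZ (8)%R [:: Ly; Lys; Lx] [:: Lys; Lys; Lx];
  rotZ (8)%R [:: Lx; Lx] [:: Lxs; Lys; Lx; Lys];
  rotZ (8)%R [:: Lx; Lx] [:: Lxs; Lys; Lys; Lx];
  rotZ (8)%R [:: Lx; Ly] [:: Lys; Lys; Lx; Lys];
  rotZ (8)%R [:: Lx; Ly] [:: Lys; Lys; Lys; Lx];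
  rotZ (-8)%R [:: Lys; Lx; Ly; Lys; Lx] [:: Lys];
  rotZ (-8)%R [:: Lys; Lx; Ly] [:: Lys; Lys; Lx]].
Definition W2_0 : seq LZt := [:: rotZ (-8)%R [:: Lxs; Lx] [:: Lxs; Lxs];
  rotZ (8)%R [:: Lx] [:: Lxs; Lxs; Lxs];
  rotZ (-8)%R [:: Lys; Ly] [:: Lxs; Lxs];
  rotZ (8)%R [:: Ly] [:: Lxs; Lxs; Lys]].
Definition W2_1 : seq LZt := [:: rotZ (-4)%R [:: Lx] [:: Lxs; Lxs; Ly; Lys; Ly];
  rotZ (4)%R [:: Lys; Ly] [:: Lxs; Ly; Lys; Ly];
  rotZ (4)%R [:: Ly; Lys; Ly; Lx] [:: Lxs; Lxs];
  rotZ (4)%R [:: Ly] [:: Lxs; Lys; Ly; Lx; Lxs];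
  rotZ (-4)%R [:: Ly] [:: Lxs; Lx; Lxs; Ly; Lys];
  rotZ (4)%R [:: Ly] [:: Lxs; Lys; Ly; Ly; Lys];
  rotZ (-4)%R [:: Ly] [:: Lxs; Ly; Lys; Ly; Lys];
  rotZ (-4)%R [:: Ly] [:: Lxs; Lys; Ly; Lys; Ly];
  rotZ (-4)%R [:: Ly; Lx; Lxs; Ly] [:: Lxs; Lys];
  rotZ (-4)%R [:: Ly; Ly; Lys; Ly] [:: Lxs; Lys];
  rotZ (4)%R [:: Ly; Lys; Ly; Ly] [:: Lxs; Lys]].
Definition W2_2 : seq LZt := [:: rotZ (4)%R [:: Ly; Lys; Ly; Lx] [:: Lxs; Lxs];
  rotZ (-4)%R [:: Lx] [:: Lxs; Lxs; Ly; Lys; Ly];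
  rotZ (4)%R [:: Lys; Ly] [:: Lxs; Ly; Lys; Ly];
  rotZ (-4)%R [:: Ly; Lx; Lxs; Ly] [:: Lxs; Lys];
  rotZ (-4)%R [:: Ly; Ly; Lys; Ly] [:: Lxs; Lys];
  rotZ (4)%R [:: Ly; Lys; Ly; Ly] [:: Lxs; Lys];
  rotZ (4)%R [:: Ly] [:: Lxs; Lys; Ly; Lx; Lxs];
  rotZ (-4)%R [:: Ly] [:: Lxs; Lx; Lxs; Ly; Lys];
  rotZ (4)%R [:: Ly] [:: Lxs; Lys; Ly; Ly; Lys];
  rotZ (-4)%R [:: Ly] [:: Lxs; Ly; Lys; Ly; Lys];
  rotZ (-4)%R [:: Ly] [:: Lxs; Lys; Ly; Lys; Ly]].
Definition W2_3 : seq LZt := [:: rotZ (-8)%R [:: Ly; Lys; Ly; Lx] [:: Lxs; Ly; Lys; Ly];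
  rotZ (-8)%R [:: Ly; Lx] [:: Lxs; Ly; Lys; Ly; Lx; Lxs];
  rotZ (8)%R [:: Ly; Lx; Lxs; Ly; Lx] [:: Lxs; Ly; Lys];
  rotZ (-8)%R [:: Ly; Lx] [:: Lxs; Ly; Lys; Ly; Ly; Lys];
  rotZ (8)%R [:: Ly; Lx] [:: Lxs; Ly; Ly; Lys; Ly; Lys];
  rotZ (8)%R [:: Ly; Lx] [:: Lxs; Ly; Lys; Ly; Lys; Ly];
  rotZ (-8)%R [:: Ly; Ly; Lys; Ly; Lys; Ly; Lx] [:: Lxs];
  rotZ (8)%R [:: Ly; Ly; Lys; Ly; Lx] [:: Lxs; Ly; Lys];
  rotZ (-8)%R [:: Ly; Ly] [:: Lys; Ly; Lys; Ly; Ly; Lys];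
  rotZ (8)%R [:: Ly; Ly; Lys; Ly; Ly] [:: Lys; Ly; Lys];
  rotZ (8)%R [:: Ly; Ly] [:: Lys; Ly; Lys; Ly; Lys; Ly];
  rotZ (8)%R [:: Ly; Lys; Ly; Ly; Lys; Ly; Lx] [:: Lxs];
  rotZ (-8)%R [:: Ly; Lys; Ly; Ly; Lx] [:: Lxs; Ly; Lys];
  rotZ (8)%R [:: Ly; Lys; Ly; Ly; Lys; Ly; Ly] [:: Lys];
  rotZ (-8)%R [:: Ly; Lys; Ly; Ly; Ly] [:: Lys; Ly; Lys];
  rotZ (-8)%R [:: Ly; Lys; Ly; Ly] [:: Lys; Ly; Lys; Ly]].
Definition W3_0 : seq LZt := [:: rotZ (8)%R [:: Lx; Lys; Lx; Lys; Lx] [:: Lxs];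
  rotZ (-8)%R [:: Lx; Lys; Lx] [:: Lxs; Lx; Lys]].
Definition W3_1 : seq LZt := [:: rotZ (4)%R [:: Lx; Lys; Lx; Lx; Lxs; Ly] [:: Lxs];
  rotZ (4)%R [:: Lx; Lys; Lx; Lxs; Ly] [:: Lxs; Lx];
  rotZ (4)%R [:: Lx; Lys; Lx; Ly; Lys; Ly] [:: Lxs];
  rotZ (4)%R [:: Lx; Lys; Lx] [:: Lxs; Lx; Lxs; Ly];
  rotZ (-4)%R [:: Lx; Lys; Lx; Lxs; Ly; Lx] [:: Lxs];
  rotZ (4)%R [:: Lx; Lys; Lx] [:: Lxs; Ly; Lys; Ly];
  rotZ (-4)%R [:: Lx; Lys; Lx] [:: Lxs; Ly; Ly; Lys];
  rotZ (-4)%R [:: Ly] [:: Lxs; Lx; Lx; Lys; Lx; Lxs];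
  rotZ (4)%R [:: Ly; Lxs; Lx; Lx] [:: Lxs; Lx; Lys];
  rotZ (4)%R [:: Lx; Lx; Lxs; Ly; Lys; Lx] [:: Lxs];
  rotZ (-4)%R [:: Lx; Lx; Lxs; Ly] [:: Lxs; Lx; Lys];
  rotZ (4)%R [:: Lx; Ly; Lys; Ly; Lys; Lx] [:: Lxs];
  rotZ (-4)%R [:: Lx; Ly; Lys; Ly] [:: Lxs; Lx; Lys];
  rotZ (-4)%R [:: Lx; Lxs; Ly; Lx; Lys; Lx] [:: Lxs];
  rotZ (4)%R [:: Lx; Lxs; Ly; Lx] [:: Lxs; Lx; Lys];
  rotZ (4)%R [:: Ly; Lx] [:: Lxs; Lx; Lys; Lx; Lxs];
  rotZ (-4)%R [:: Ly; Lx] [:: Lxs; Lx; Lxs; Lx; Lys];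
  rotZ (-4)%R [:: Ly; Lys; Ly; Lx; Lys; Lx] [:: Lxs];
  rotZ (4)%R [:: Ly; Lys; Ly; Lx] [:: Lxs; Lx; Lys];
  rotZ (4)%R [:: Ly; Ly; Lys; Lx; Lys; Lx] [:: Lxs];
  rotZ (-4)%R [:: Ly; Ly; Lys; Lx] [:: Lxs; Lx; Lys];
  rotZ (4)%R [:: Lx; Lxs; Lx; Lxs; Lx; Lx] [:: Lxs];
  rotZ (-4)%R [:: Lx] [:: Lxs; Lx; Lys; Ly; Lxs; Lx];
  rotZ (4)%R [:: Lx] [:: Lxs; Lx; Lxs; Lx; Ly; Lys];
  rotZ (-4)%R [:: Lx; Lxs; Lx; Lx] [:: Lxs; Lx; Lxs];
  rotZ (-4)%R [:: Lx] [:: Lxs; Lx; Lx; Lxs; Ly; Lys];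
  rotZ (4)%R [:: Lx; Lxs; Lx; Lys; Ly; Lx] [:: Lxs];
  rotZ (-4)%R [:: Lx; Lxs; Lx; Ly; Lys; Lx] [:: Lxs];
  rotZ (-4)%R [:: Lx] [:: Lxs; Lx; Lys; Lx; Lxs; Ly];
  rotZ (-4)%R [:: Lx] [:: Lxs; Lx; Ly; Lys; Ly; Lys];
  rotZ (-4)%R [:: Lx] [:: Lxs; Lx; Lys; Ly; Lys; Ly];
  rotZ (4)%R [:: Lx] [:: Lxs; Lx; Lys; Ly; Ly; Lys]].
Definition W3_2 : seq LZt := [:: rotZ (-4)%R [:: Ly] [:: Lxs; Lx; Lx; Lys; Lx; Lxs];
  rotZ (4)%R [:: Ly; Lxs; Lx; Lx] [:: Lxs; Lx; Lys];
  rotZ (4)%R [:: Lx; Lx; Lxs; Ly; Lys; Lx] [:: Lxs];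
  rotZ (-4)%R [:: Lx; Lx; Lxs; Ly] [:: Lxs; Lx; Lys];
  rotZ (4)%R [:: Lx; Ly; Lys; Ly; Lys; Lx] [:: Lxs];
  rotZ (-4)%R [:: Lx; Ly; Lys; Ly] [:: Lxs; Lx; Lys];
  rotZ (-4)%R [:: Lx; Lxs; Ly; Lx; Lys; Lx] [:: Lxs];
  rotZ (4)%R [:: Lx; Lxs; Ly; Lx] [:: Lxs; Lx; Lys];
  rotZ (4)%R [:: Ly; Lx] [:: Lxs; Lx; Lys; Lx; Lxs];
  rotZ (-4)%R [:: Ly; Lx] [:: Lxs; Lx; Lxs; Lx; Lys];
  rotZ (-4)%R [:: Ly; Lys; Ly; Lx; Lys; Lx] [:: Lxs];
  rotZ (4)%R [:: Ly; Lys; Ly; Lx] [:: Lxs; Lx; Lys];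
  rotZ (4)%R [:: Ly; Ly; Lys; Lx; Lys; Lx] [:: Lxs];
  rotZ (-4)%R [:: Ly; Ly; Lys; Lx] [:: Lxs; Lx; Lys];
  rotZ (4)%R [:: Lx; Lys; Lx; Lx; Lxs; Ly] [:: Lxs];
  rotZ (4)%R [:: Lx; Lys; Lx; Lxs; Ly] [:: Lxs; Lx];
  rotZ (4)%R [:: Lx; Lys; Lx; Ly; Lys; Ly] [:: Lxs];
  rotZ (4)%R [:: Lx; Lys; Lx] [:: Lxs; Lx; Lxs; Ly];
  rotZ (-4)%R [:: Lx; Lys; Lx; Lxs; Ly; Lx] [:: Lxs];
  rotZ (4)%R [:: Lx; Lys; Lx] [:: Lxs; Ly; Lys; Ly];
  rotZ (-4)%R [:: Lx; Lys; Lx] [:: Lxs; Ly; Ly; Lys];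
  rotZ (4)%R [:: Lx; Lxs; Lx; Lxs; Lx; Lx] [:: Lxs];
  rotZ (-4)%R [:: Lx] [:: Lxs; Lx; Lys; Ly; Lxs; Lx];
  rotZ (4)%R [:: Lx] [:: Lxs; Lx; Lxs; Lx; Ly; Lys];
  rotZ (-4)%R [:: Lx; Lxs; Lx; Lx] [:: Lxs; Lx; Lxs];
  rotZ (-4)%R [:: Lx] [:: Lxs; Lx; Lx; Lxs; Ly; Lys];
  rotZ (4)%R [:: Lx; Lxs; Lx; Lys; Ly; Lx] [:: Lxs];
  rotZ (-4)%R [:: Lx; Lxs; Lx; Ly; Lys; Lx] [:: Lxs];
  rotZ (-4)%R [:: Lx] [:: Lxs; Lx; Lys; Lx; Lxs; Ly];
  rotZ (-4)%R [:: Lx] [:: Lxs; Lx; Ly; Lys; Ly; Lys];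
  rotZ (-4)%R [:: Lx] [:: Lxs; Lx; Lys; Ly; Lys; Ly];
  rotZ (4)%R [:: Lx] [:: Lxs; Lx; Lys; Ly; Ly; Lys]].
Definition W3_3 : seq LZt := [:: rotZ (-8)%R [:: Ly] [:: Lxs; Lx; Lx; Lx; Lxs; Ly; Lxs];
  rotZ (-8)%R [:: Ly] [:: Lxs; Lx; Lx; Lxs; Ly; Lxs; Lx];
  rotZ (-8)%R [:: Ly] [:: Lxs; Lx; Lx; Ly; Lys; Ly; Lxs];
  rotZ (-8)%R [:: Ly; Lxs; Lx; Lx] [:: Lxs; Lx; Lxs; Ly];
  rotZ (8)%R [:: Ly] [:: Lxs; Lx; Lx; Lxs; Ly; Lx; Lxs];
  rotZ (-8)%R [:: Ly] [:: Lxs; Lx; Lx; Lxs; Ly; Lys; Ly];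
  rotZ (8)%R [:: Ly] [:: Lxs; Lx; Lx; Lxs; Ly; Ly; Lys];
  rotZ (8)%R [:: Lx; Lx; Lxs; Ly; Lx; Lxs; Ly] [:: Lxs];
  rotZ (8)%R [:: Lx; Lx; Lxs; Ly; Lxs; Ly] [:: Lxs; Lx];
  rotZ (8)%R [:: Lx; Lx; Lxs; Ly; Ly; Lys; Ly] [:: Lxs];
  rotZ (8)%R [:: Lx; Lx; Lxs; Ly] [:: Lxs; Lx; Lxs; Ly];
  rotZ (-8)%R [:: Lx; Lx; Lxs; Ly; Lxs; Ly; Lx] [:: Lxs];
  rotZ (8)%R [:: Lx; Lx] [:: Lxs; Ly; Lxs; Ly; Lys; Ly];
  rotZ (-8)%R [:: Lx; Lx] [:: Lxs; Ly; Lxs; Ly; Ly; Lys];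
  rotZ (8)%R [:: Lx; Ly; Lys; Ly; Lx; Lxs; Ly] [:: Lxs];
  rotZ (8)%R [:: Lx; Ly; Lys; Ly; Lxs; Ly] [:: Lxs; Lx];
  rotZ (8)%R [:: Lx; Ly; Lys; Ly; Ly; Lys; Ly] [:: Lxs];
  rotZ (8)%R [:: Lx; Ly; Lys; Ly] [:: Lxs; Lx; Lxs; Ly];
  rotZ (-8)%R [:: Lx; Ly; Lys; Ly; Lxs; Ly; Lx] [:: Lxs];
  rotZ (8)%R [:: Lx; Ly; Lys; Ly] [:: Lxs; Ly; Lys; Ly];
  rotZ (-8)%R [:: Lx; Ly; Lys; Ly] [:: Lxs; Ly; Ly; Lys];
  rotZ (-8)%R [:: Lx; Lxs; Ly; Lx; Lx; Lxs; Ly] [:: Lxs];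
  rotZ (-8)%R [:: Lx; Lxs; Ly; Lx; Lxs; Ly] [:: Lxs; Lx];
  rotZ (-8)%R [:: Lx; Lxs; Ly; Lx; Ly; Lys; Ly] [:: Lxs];
  rotZ (-8)%R [:: Lx; Lxs; Ly; Lx] [:: Lxs; Lx; Lxs; Ly];
  rotZ (8)%R [:: Lx; Lxs; Ly; Lx; Lxs; Ly; Lx] [:: Lxs];
  rotZ (-8)%R [:: Lx; Lxs; Ly; Lx] [:: Lxs; Ly; Lys; Ly];
  rotZ (8)%R [:: Lx] [:: Lxs; Ly; Lx; Lxs; Ly; Ly; Lys];
  rotZ (8)%R [:: Ly; Lx] [:: Lxs; Lx; Lx; Lxs; Ly; Lxs];
  rotZ (8)%R [:: Ly; Lx] [:: Lxs; Lx; Lxs; Ly; Lxs; Lx];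
  rotZ (8)%R [:: Ly; Lx] [:: Lxs; Lx; Ly; Lys; Ly; Lxs];
  rotZ (8)%R [:: Ly; Lx] [:: Lxs; Lx; Lxs; Lx; Lxs; Ly];
  rotZ (-8)%R [:: Ly; Lx] [:: Lxs; Lx; Lxs; Ly; Lx; Lxs];
  rotZ (8)%R [:: Ly; Lx] [:: Lxs; Lx; Lxs; Ly; Lys; Ly];
  rotZ (-8)%R [:: Ly; Lx] [:: Lxs; Lx; Lxs; Ly; Ly; Lys];
  rotZ (-8)%R [:: Ly; Lys; Ly; Lx; Lx] [:: Lxs; Ly; Lxs];
  rotZ (-8)%R [:: Ly; Lys; Ly; Lx; Lxs; Ly] [:: Lxs; Lx];
  rotZ (-8)%R [:: Ly; Lys; Ly; Lx; Ly; Lys; Ly] [:: Lxs];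
  rotZ (-8)%R [:: Ly; Lys; Ly; Lx] [:: Lxs; Lx; Lxs; Ly];
  rotZ (8)%R [:: Ly; Lys; Ly; Lx; Lxs; Ly; Lx] [:: Lxs];
  rotZ (-8)%R [:: Ly; Lys; Ly; Lx] [:: Lxs; Ly; Lys; Ly];
  rotZ (8)%R [:: Ly; Lys; Ly; Lx] [:: Lxs; Ly; Ly; Lys];
  rotZ (8)%R [:: Ly; Ly; Lys; Lx; Lx] [:: Lxs; Ly; Lxs];
  rotZ (8)%R [:: Ly; Ly; Lys; Lx; Lxs; Ly] [:: Lxs; Lx];
  rotZ (8)%R [:: Ly; Ly; Lys; Lx; Ly; Lys; Ly] [:: Lxs];
  rotZ (8)%R [:: Ly; Ly; Lys; Lx] [:: Lxs; Lx; Lxs; Ly];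
  rotZ (-8)%R [:: Ly; Ly; Lys; Lx] [:: Lxs; Ly; Lx; Lxs];
  rotZ (8)%R [:: Ly; Ly; Lys; Lx] [:: Lxs; Ly; Lys; Ly];
  rotZ (-8)%R [:: Ly; Ly; Lys; Lx] [:: Lxs; Ly; Ly; Lys];
  rotZ (8)%R [:: Ly; Lxs; Lx; Ly] [:: Lxs; Lx; Lx; Lxs];
  rotZ (-8)%R [:: Ly; Lxs; Lx; Ly; Lys; Ly] [:: Lxs; Lx];
  rotZ (8)%R [:: Ly] [:: Lxs; Lx; Ly; Lxs; Lx; Ly; Lys];
  rotZ (-8)%R [:: Ly; Lxs; Lx; Ly; Lx] [:: Lxs; Lx; Lxs];
  rotZ (-8)%R [:: Ly] [:: Lxs; Lx; Ly; Lx; Lxs; Ly; Lys];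
  rotZ (8)%R [:: Ly] [:: Lxs; Lx; Ly; Lys; Ly; Lx; Lxs];
  rotZ (-8)%R [:: Ly] [:: Lxs; Lx; Ly; Ly; Lys; Lx; Lxs];
  rotZ (-8)%R [:: Ly] [:: Lxs; Lx; Ly; Lys; Lx; Lxs; Ly];
  rotZ (-8)%R [:: Ly] [:: Lxs; Lx; Ly; Ly; Lys; Ly; Lys];
  rotZ (-8)%R [:: Ly] [:: Lxs; Lx; Ly; Lys; Ly; Lys; Ly];
  rotZ (8)%R [:: Ly] [:: Lxs; Lx; Ly; Lys; Ly; Ly; Lys];
  rotZ (-8)%R [:: Ly; Lx; Lxs; Ly] [:: Lxs; Lx; Lx; Lxs];
  rotZ (8)%R [:: Ly; Lx; Lxs; Ly; Lys; Ly] [:: Lxs; Lx];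
  rotZ (-8)%R [:: Ly; Lx; Lxs; Ly] [:: Lxs; Lx; Ly; Lys];
  rotZ (8)%R [:: Ly; Lx; Lxs; Ly; Lx] [:: Lxs; Lx; Lxs];
  rotZ (8)%R [:: Ly; Lx; Lxs; Ly; Lx] [:: Lxs; Ly; Lys];
  rotZ (-8)%R [:: Ly; Lx] [:: Lxs; Ly; Lys; Ly; Lx; Lxs];
  rotZ (8)%R [:: Ly; Lx; Lxs; Ly; Ly; Lys; Lx] [:: Lxs];
  rotZ (8)%R [:: Ly; Lx] [:: Lxs; Ly; Lys; Lx; Lxs; Ly];
  rotZ (8)%R [:: Ly; Lx] [:: Lxs; Ly; Ly; Lys; Ly; Lys];
  rotZ (8)%R [:: Ly; Lx] [:: Lxs; Ly; Lys; Ly; Lys; Ly];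
  rotZ (-8)%R [:: Ly; Lx] [:: Lxs; Ly; Lys; Ly; Ly; Lys];
  rotZ (8)%R [:: Lx; Lxs; Ly; Ly; Lxs; Lx; Lx] [:: Lxs];
  rotZ (-8)%R [:: Lx; Lxs; Ly; Ly; Lys; Ly] [:: Lxs; Lx];
  rotZ (8)%R [:: Lx; Lxs; Ly; Ly] [:: Lxs; Lx; Ly; Lys];
  rotZ (-8)%R [:: Lx; Lxs; Ly; Ly; Lx] [:: Lxs; Lx; Lxs];
  rotZ (-8)%R [:: Lx; Lxs; Ly; Ly; Lx] [:: Lxs; Ly; Lys];
  rotZ (8)%R [:: Lx; Lxs; Ly; Ly; Lys; Ly; Lx] [:: Lxs];
  rotZ (-8)%R [:: Lx; Lxs; Ly; Ly; Ly; Lys; Lx] [:: Lxs];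
  rotZ (-8)%R [:: Lx; Lxs; Ly; Ly; Lys; Lx] [:: Lxs; Ly];
  rotZ (-8)%R [:: Lx] [:: Lxs; Ly; Ly; Ly; Lys; Ly; Lys];
  rotZ (-8)%R [:: Lx] [:: Lxs; Ly; Ly; Lys; Ly; Lys; Ly];
  rotZ (8)%R [:: Lx] [:: Lxs; Ly; Ly; Lys; Ly; Ly; Lys];
  rotZ (8)%R [:: Ly; Lys; Ly; Ly] [:: Lxs; Lx; Lx; Lxs];
  rotZ (-8)%R [:: Ly; Lys; Ly; Ly; Lys; Ly] [:: Lxs; Lx];
  rotZ (8)%R [:: Ly; Lys; Ly; Ly] [:: Lxs; Lx; Ly; Lys];
  rotZ (-8)%R [:: Ly; Lys; Ly; Ly; Lx] [:: Lxs; Lx; Lxs];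
  rotZ (-8)%R [:: Ly; Lys; Ly; Ly; Lx] [:: Lxs; Ly; Lys];
  rotZ (8)%R [:: Ly; Lys; Ly; Ly; Lys; Ly; Lx] [:: Lxs];
  rotZ (-8)%R [:: Ly; Lys; Ly; Ly; Ly; Lys; Lx] [:: Lxs];
  rotZ (-8)%R [:: Ly; Lys; Ly; Ly; Lys; Lx] [:: Lxs; Ly];
  rotZ (-8)%R [:: Ly; Lys; Ly; Ly; Ly] [:: Lys; Ly; Lys];
  rotZ (-8)%R [:: Ly; Lys; Ly; Ly] [:: Lys; Ly; Lys; Ly];
  rotZ (8)%R [:: Ly; Lys; Ly; Ly; Lys; Ly; Ly] [:: Lys];
  rotZ (-8)%R [:: Ly; Ly; Lys; Ly] [:: Lxs; Lx; Lx; Lxs];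
  rotZ (8)%R [:: Ly; Ly; Lys; Ly; Lys; Ly] [:: Lxs; Lx];
  rotZ (-8)%R [:: Ly; Ly; Lys; Ly] [:: Lxs; Lx; Ly; Lys];
  rotZ (8)%R [:: Ly; Ly; Lys; Ly; Lx] [:: Lxs; Lx; Lxs];
  rotZ (8)%R [:: Ly; Ly; Lys; Ly; Lx] [:: Lxs; Ly; Lys];
  rotZ (-8)%R [:: Ly; Ly; Lys; Ly; Lys; Ly; Lx] [:: Lxs];
  rotZ (8)%R [:: Ly; Ly; Lys; Ly; Ly; Lys; Lx] [:: Lxs];
  rotZ (8)%R [:: Ly; Ly; Lys; Ly; Lys; Lx] [:: Lxs; Ly];
  rotZ (8)%R [:: Ly; Ly; Lys; Ly; Ly] [:: Lys; Ly; Lys];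
  rotZ (8)%R [:: Ly; Ly] [:: Lys; Ly; Lys; Ly; Lys; Ly];
  rotZ (-8)%R [:: Ly; Ly] [:: Lys; Ly; Lys; Ly; Ly; Lys]].
Theorem mainTheorem7 :
  compatible Pi1a Pi1b /\ compatible Pi2a Pi2b /\ compatible Pi3a Pi3b.
Proof.
rewrite E1a E1b E2a E2b E3a E3b.
split; [|split].
- by apply: (compatP (L1:=W1_0) (L2:=W1_1) (L3:=W1_2) (L4:=W1_3)); vm_compute.
- by apply: (compatP (L1:=W2_0) (L2:=W2_1) (L3:=W2_2) (L4:=W2_3)); vm_compute.
- by apply: (compatP (L1:=W3_0) (L2:=W3_1) (L3:=W3_2) (L4:=W3_3)); vm_compute.
Qed.
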